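(* Let $d\ge1$, $A=d$, and consider the MDP and model class described in the context. Let $\theta\in[-1,1]^d$ be arbitrary (e.g., the parameter output by any, possibly stochastic, algorithm that outputs a model $T_\theta$ in the class), and let $\pi_\theta$ be the greedy policy with respect to $T_\theta$, with ties broken uniformly at random. Then $$\max_{\pi}\eta(T^\star,\pi)-\eta(T^\star,\pi_\theta)\ge\frac{(A-1)\gamma^2}{A(1-\gamma)}.$$
   Context: MDP: states $\mathcal{S}=\{s_0,s_1,\dots,s_d\}\cup\{s_g,s_b\}$, actions $a_1,\dots,a_d$ ($A=d$ actions), discount $\gamma\in[0,1)$, fixed initial state $s_0$. True deterministic dynamics $T^\star$: $T^\star(s_0,a_i)=s_i$; $T^\star(s_i,a_j)=s_g$ if $i=j$ and $s_b$ if $i\ne j$ ($i,j\in[d]$); $T^\star(s_g,a_i)=s_g$, $T^\star(s_b,a_i)=s_b$. Reward $r(s,a_i)=\mathbf{1}\{s=s_g\}$. For a policy $\pi$ and dynamics $T$, $\eta(T,\pi)=\mathbb{E}[\sum_{t\ge0}\gamma^t r(s_t,a_t)\mid s_0,\ a_t\sim\pi(s_t),\ s_{t+1}\sim T(s_t,a_t)]$. Model class $\{T_\theta:\theta\in[-1,1]^d\}$: for $i,j\in[d]$, $T_\theta(s_i,a_j)=s_g$ with probability $\frac12(1+e_j^\top\theta)$ and $s_b$ with probability $\frac12(1-e_j^\top\theta)$, where $e_j$ is the $j$-th standard basis vector; on $s_0,s_g,s_b$, $T_\theta$ coincides with $T^\star$. The greedy policy $\pi_\theta$ w.r.t. $T_\theta$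 is the optimal policy of the MDP with dynamics $T_\theta$ and reward $r$, where at each state it selects uniformly at random among the actions maximizing the optimal $Q$-function of $T_\theta$. The maximum over $\pi$ ranges over all policies. *)

(* Defs.v *)
From HB Require Import structures.
From mathcomp Require Import all_boot all_order all_algebra.
From mathcomp Require Import all_classical all_reals all_analysis.
Set Implicit Arguments. Unset Strict Implicit. Unset Printing Implicit Defensive.
Import Order.TTheory GRing.Theory Num.Theory numFieldNormedType.Exports.
Local Open Scope ring_scope.
Local Open Scope classical_set_scope.

Section MDP.
Variables (R : realType) (S A : finType).

(* dynamics T s a s' = probability of moving to s' from s under a;
   a (stationary, stochastic) policy pi s a = probability of playing a in s *)
Definition is_policy (pi : S -> A -> R) : Prop :=
  forall s, (forall a, 0 <= pi s a) /\ \sum_(a : A) pi s a = 1.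

Fixpoint state_dist (T : S -> A -> S -> R) (pi : S -> A -> R) (mu0 : S -> R)
    (t : nat) : S -> R :=
  match t with
  | 0 => mu0
  | t'.+1 => fun s' => \sum_(s : S) \sum_(a : A)
                 state_dist T pi mu0 t' s * pi s a * T s a s'
  end.

Definition disc_return (T : S -> A -> S -> R) (pi : S -> A -> R) (r : S -> A -> R)
    (gamma : R) (mu0 : S -> R) : R :=
  limn (series (fun t : nat => (gamma ^+ t *
     \sum_(s : S) \sum_(a : A) state_dist T pi mu0 t s * pi s a * r s a : R))).

Definition dirac_st (x : S) : S -> R := fun s => if s == x then 1 else 0.

Definition eta_val (T : S -> A -> S -> R) (pi : S -> A -> R) (r : S -> A -> R)
    (gamma : R) (x : S) : R := disc_return T pi r gamma (dirac_st x).

Definition opt_value (T : S -> A -> S -> R) (r : S -> A -> R) (gamma : R) (x : S) : R :=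
  sup [set eta_val T pi r gamma x | pi in is_policy].

Definition Qpi (T : S -> A -> S -> R) (pi : S -> A -> R) (r : S -> A -> R)
    (gamma : R) (s : S) (a : A) : R :=
  r s a + gamma * \sum_(s' : S) T s a s' * eta_val T pi r gamma s'.

Definition Qstar (T : S -> A -> S -> R) (r : S -> A -> R) (gamma : R)
    (s : S) (a : A) : R :=
  sup [set Qpi T pi r gamma s a | pi in is_policy].

Definition greedy_set (T : S -> A -> S -> R) (r : S -> A -> R) (gamma : R)
    (s : S) : {set A} :=
  [set a | [forall b, Qstar T r gamma s b <= Qstar T r gamma s a]].

Definition greedy (T : S -> A -> S -> R) (r : S -> A -> R) (gamma : R) :
    S -> A -> R :=
  fun s a => if a \in greedy_set T r gamma s
             then (#|greedy_set T r gamma s|%:R)^-1 else 0.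
End MDP.

Inductive state (d : nat) := st0 | sti of 'I_d | stg | stb.
Arguments st0 {d}. Arguments stg {d}. Arguments stb {d}.

Definition state_enc d (s : state d) : option (option (option 'I_d)) :=
  match s with
  | st0 => None | stg => Some None | stb => Some (Some None)
  | sti i => Some (Some (Some i)) end.
Definition state_dec d (o : option (option (option 'I_d))) : state d :=
  match o with
  | None => st0 | Some None => stg | Some (Some None) => stb
  | Some (Some (Some i)) => sti i end.
Lemma state_encK d : cancel (@state_enc d) (@state_dec d).
Proof. by case. Qed.
HB.instance Definition _ d := Equality.copy (state d) (can_type (@state_encK d)).
HB.instance Definition _ d := Choice.copy (state d) (can_type (@state_encK d)).
HB.instance Definition _ d := Countable.copy (state d) (can_type (@state_encK d)).
HB.instance Definition _ d := Finite.copy (state d) (can_type (@state_encK d)).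

Section Instance.
Variables (R : realType) (d : nat).

Definition next (s : state d) (a : 'I_d) : state d :=
  match s with
  | st0 => sti a
  | sti i => if i == a then stg else stb
  | stg => stg
  | stb => stb
  end.
Definition Tstar (s : state d) (a : 'I_d) (s' : state d) : R :=
  if s' == next s a then 1 else 0.

Definition Ttheta (theta : 'I_d -> R) (s : state d) (a : 'I_d) (s' : state d) : R :=
  match s with
  | sti _ => if s' == stg then (1 + theta a) / 2
             else if s' == stb then (1 - theta a) / 2 else 0
  | _ => Tstar s a s'
  end.

Definition rew (s : state d) (a : 'I_d) : R := if s == stg then 1 else 0.
End Instance.

(* Main.v *)
Require Import Defs.
From HB Require Import structures.
From mathcomp Require Import all_boot all_order all_algebra.
From mathcomp Require Import all_classical all_reals all_analysis.
Import Order.TTheory GRing.Theory Num.Theory numFieldNormedType.Exports.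
From mathcomp Require Import ring lra.
Local Open Scope ring_scope.
Local Open Scope classical_set_scope.

Section Pf.
Variables (R : realType) (d : nat).
Local Notation st := (state d).
Local Notation dir := (dirac_st R).

Lemma sum_pred1 (x : st) (F : st -> R) :
  \sum_s (if s == x then 1 else 0) * F s = F x.
Proof.
rewrite (bigD1 x) //= eqxx mul1r big1 ?addr0 // => s /negbTE ->.
by rewrite mul0r.
Qed.

Lemma sd_dirac (T : st -> 'I_d -> st -> R) pi x s' :
  state_dist T pi (dirac_st R x) 1 s' = \sum_a pi x a * T x a s'.
Proof.
rewrite /= (bigD1 x) //= [X in _ + X]big1 ?addr0.
  by apply: eq_bigr => a _; rewrite /dirac_st eqxx mul1r.
move=> s /negbTE H; apply: big1 => a _.
by rewrite /dirac_st H !mul0r.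
Qed.

Lemma sd_S (T : st -> 'I_d -> st -> R) pi mu t s' :
  state_dist T pi mu t.+1 s' = \sum_s \sum_a state_dist T pi mu t s * pi s a * T s a s'.
Proof. by []. Qed.

Lemma sti_eq (i j : 'I_d) : (sti i == sti j :> st) = (i == j).
Proof. by apply/eqP/eqP => [[]|->]. Qed.

Lemma Tstar_st0 s a : @Tstar R d s a st0 = 0.
Proof. by rewrite /Tstar; case: s => [|i||] //=; case: (i == a). Qed.

Lemma Ttheta_st0 th s a : @Ttheta R d th s a st0 = 0.
Proof. by case: s => [|i||] //=; rewrite /Tstar /=. Qed.

Lemma Ttheta_sti th s a i : s != st0 -> @Ttheta R d th s a (sti i) = 0.
Proof. by case: s => [|j||] //=; rewrite /Tstar /=. Qed.

Lemma Tstar_sti s a i : s != st0 -> @Tstar R d s a (sti i) = 0.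
Proof. by rewrite /Tstar; case: s => [|j||] //=; case: (j == a). Qed.


Section Theta.
Variables (th : 'I_d -> R) (gamma : R).
Local Notation Tt := (@Ttheta R d th).
Local Notation rw := (@rew R d).

Lemma sdA pi k t : state_dist Tt pi (dir (sti k)) t st0 = 0.
Proof.
case: t => [|t] /=; first by rewrite /dirac_st.
by apply: big1 => s _; apply: big1 => a _; rewrite Ttheta_st0 mulr0.
Qed.

Lemma sdB pi k t i : state_dist Tt pi (dir (sti k)) t.+1 (sti i) = 0.
Proof.
rewrite /=; apply: big1 => s _; apply: big1 => a _.
have [->|ne] := eqVneq s st0; first by rewrite sdA !mul0r.
by rewrite Ttheta_sti // mulr0.
Qed.

Definition swp (pi : st -> 'I_d -> R) (a b : 'I_d) : st -> 'I_d -> R :=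
  fun s c => if s == sti b then pi (sti a) c else pi s c.

Lemma swp_pol pi a b : is_policy pi -> is_policy (swp pi a b).
Proof. by move=> H s; rewrite /swp; case: (s == sti b); apply: H. Qed.

Lemma sdD pi a b t s :
  state_dist Tt (swp pi a b) (dir (sti b)) t.+1 s =
  state_dist Tt pi (dir (sti a)) t.+1 s.
Proof.
elim: t s => [|t IH] s.
  by rewrite !sd_dirac /swp eqxx.
rewrite sd_S [in RHS]sd_S; apply: eq_bigr => u _; apply: eq_bigr => c _.
rewrite IH /swp; have [->|ne] := eqVneq u (sti b).
  by rewrite sdB !mul0r.
by [].
Qed.

Lemma rew_dir k (p : st -> 'I_d -> R) :
  \sum_s \sum_c dir (sti k) s * p s c * rw s c = 0.
Proof.
apply: big1 => s _; apply: big1 => c _.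
by rewrite /dirac_st /rew; case: s => [|j||] /=; rewrite ?mulr0 ?mul0r.
Qed.

Lemma eta_swp pi a b :
  eta_val Tt (swp pi a b) rw gamma (sti b) = eta_val Tt pi rw gamma (sti a).
Proof.
rewrite /eta_val /disc_return; congr (limn (series _)).
apply: funext => -[|t]; first by rewrite !rew_dir.
congr (_ * _); apply: eq_bigr => s _; apply: eq_bigr => c _.
rewrite sdD /swp; have [->|ne] := eqVneq s (sti b).
  by rewrite sdB !mul0r.
by [].
Qed.


Lemma Qpi_st0 pi a :
  Qpi Tt pi rw gamma st0 a = gamma * eta_val Tt pi rw gamma (sti a).
Proof.
rewrite /Qpi /rew /= add0r; congr (_ * _).
rewrite -[RHS](sum_pred1 (sti a)); apply: eq_bigr => s _.
by rewrite /Tstar /=.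
Qed.

Lemma Qst0_sub (a b : 'I_d) :
  [set Qpi Tt pi rw gamma st0 a | pi in @is_policy R st ('I_d)] `<=`
  [set Qpi Tt pi rw gamma st0 b | pi in @is_policy R st ('I_d)].
Proof.
move=> _ [pi Hpi <-]; exists (swp pi a b); first exact: swp_pol.
by rewrite !Qpi_st0 eta_swp.
Qed.

Lemma Qstar_st0 a b : Qstar Tt rw gamma st0 a = Qstar Tt rw gamma st0 b.
Proof. by rewrite /Qstar; congr sup; apply/seteqP; split; apply: Qst0_sub. Qed.

Lemma Qstar_sti i j c :
  Qstar Tt rw gamma (sti i) c = Qstar Tt rw gamma (sti j) c.
Proof.
have E pi : Qpi Tt pi rw gamma (sti i) c = Qpi Tt pi rw gamma (sti j) c.
  by rewrite /Qpi /rew /=.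
by rewrite /Qstar; congr sup; apply/seteqP; split => _ [pi Hpi <-]; exists pi.
Qed.

Lemma greedy_st0 c : greedy Tt rw gamma st0 c = (d%:R)^-1.
Proof.
have E : greedy_set Tt rw gamma st0 = [set: 'I_d]%SET.
  apply/setP => c'; rewrite !inE; apply/forallP => b.
  by rewrite (Qstar_st0 b c').
by rewrite /greedy E inE cardsE card_ord.
Qed.

Lemma greedy_sti i j : greedy Tt rw gamma (sti i) = greedy Tt rw gamma (sti j).
Proof.
have E : Qstar Tt rw gamma (sti i) = Qstar Tt rw gamma (sti j).
  by apply: funext => c; apply: Qstar_sti.
by rewrite /greedy /greedy_set /= E.
Qed.

End Theta.

Lemma greedy_pol (T : st -> 'I_d -> st -> R) r g (i0 : 'I_d) :
  is_policy (greedy T r g).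
Proof.
move=> s; have [a _ Ha] := @arg_maxP _ _ _ i0 xpredT (Qstar T r g s) isT.
have aG : a \in greedy_set T r g s.
  by rewrite inE; apply/forallP => b; apply: Ha.
split => [c|]; rewrite /greedy.
  by case: ifP => _; rewrite ?invr_ge0 ?ler0n.
set n := #|greedy_set T r g s|.
have n0 : n != 0%N by rewrite -lt0n card_gt0; apply/set0Pn; exists a.
rewrite -big_mkcond /= sumr_const -(mulr_natl (n%:R^-1)) mulfV //.
by rewrite pnatr_eq0.
Qed.


Lemma sum_sti (w : 'I_d -> R) (G : st -> R) :
  (forall s, G s = match s with sti i => w i | _ => 0 end) ->
  \sum_s G s = \sum_i w i.
Proof.
move=> HG.
transitivity (\sum_s \sum_i (if s == sti i then 1 else 0) * w i).
  apply: eq_bigr => s _; rewrite HG; case: s => [|i||];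
    try by (rewrite big1 // => b _; rewrite /= mul0r).
  rewrite (bigD1 i) //= eqxx mul1r big1 ?addr0 // => b nb.
  by rewrite sti_eq eq_sym (negbTE nb) mul0r.
rewrite exchange_big; apply: eq_bigr => i _.
exact: (sum_pred1 (sti i) (fun _ => w i)).
Qed.

Section Star.
Variables (gamma : R) (pi : st -> 'I_d -> R).
Hypothesis Hpi : is_policy pi.
Local Notation Ts := (@Tstar R d).
Local Notation rw := (@rew R d).
Local Notation sd := (state_dist Ts pi (dir st0)).
Definition cst := \sum_i pi st0 i * pi (sti i) i.

Lemma S0 t : sd t.+1 st0 = 0.
Proof. by rewrite sd_S; apply: big1 => s _; apply: big1 => a _; rewrite Tstar_st0 mulr0. Qed.

Lemma Si t i : sd t.+2 (sti i) = 0.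
Proof.
rewrite sd_S; apply: big1 => s _; apply: big1 => a _.
have [->|ne] := eqVneq s st0; first by rewrite S0 !mul0r.
by rewrite Tstar_sti // mulr0.
Qed.

Lemma sd1v s : sd 1 s = match s with sti i => pi st0 i | _ => 0 end.
Proof.
rewrite sd_dirac; case: s => [|i||];
  try by (rewrite big1 // => b _; rewrite /Tstar /= mulr0).
rewrite (bigD1 i) //= /Tstar /= eqxx mulr1 big1 ?addr0 // => b nb.
by rewrite sti_eq eq_sym (negbTE nb) mulr0.
Qed.

Lemma S2 : sd 2 stg = cst.
Proof.
rewrite sd_S; apply: sum_sti => s; case: s => [|i||];
  try by (rewrite big1 // => a _; rewrite sd1v !mul0r).
rewrite sd1v (bigD1 i) //= /Tstar /= eqxx eqxx mulr1 big1 ?addr0 // => b nb.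
by move: nb; rewrite eq_sym => /negbTE ->; rewrite /= mulr0.
Qed.

Lemma S3 t : sd t.+3 stg = sd t.+2 stg.
Proof.
rewrite sd_S; set f := state_dist _ _ _ t.+2.
rewrite (bigD1 stg) //= [X in _ + X]big1 ?addr0.
  under eq_bigr => a _ do rewrite /Tstar /= ?eqxx mulr1.
  by rewrite -big_distrr /= (proj2 (Hpi stg)) mulr1.
move=> s ns; apply: big1 => a _; case: s ns => [|i||] ns.
- by rewrite /f S0 !mul0r.
- by rewrite /f Si !mul0r.
- by rewrite eqxx in ns.
- by rewrite /Tstar /= mulr0.
Qed.

Lemma SG t : sd t.+2 stg = cst.
Proof. by elim: t => [|t IH]; [exact: S2 | rewrite S3]. Qed.

Lemma Rt t : \sum_s \sum_a sd t s * pi s a * rw s a = sd t stg.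
Proof.
rewrite (bigD1 stg) //= [X in _ + X]big1 ?addr0.
  under eq_bigr => a _ do rewrite /rew ?eqxx mulr1.
  by rewrite -big_distrr /= (proj2 (Hpi stg)) mulr1.
move=> s ns; apply: big1 => a _.
by rewrite /rew (negbTE ns) mulr0.
Qed.


Lemma series0 (u : nat -> R) : series u 0 = 0.
Proof. by rewrite /series /= big_geq. Qed.

Lemma eta_star (g0 : 0 <= gamma) (g1 : gamma < 1) :
  eta_val Ts pi rw gamma st0 = gamma ^+ 2 * cst / (1 - gamma).
Proof.
rewrite /eta_val /disc_return.
have -> : (fun t : nat => gamma ^+ t * \sum_s \sum_a sd t s * pi s a * rw s a)
   = (fun t => gamma ^+ t * sd t stg) by apply: funext => t; rewrite Rt.
apply/cvg_lim => //.
rewrite -(cvg_shiftn 2).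
have -> : (fun n => series (fun t => gamma ^+ t * sd t stg) (n + 2)%N)
   = series (geometric (gamma ^+ 2 * cst) gamma).
  apply: funext => n; rewrite addn2; elim: n => [|n IH].
    rewrite !seriesSr !series0 sd1v /= /dirac_st /=.
    by rewrite !mulr0 !addr0.
  rewrite seriesSr IH [in RHS]seriesSr; congr (_ + _).
  by rewrite SG /geometric /= -addn2 exprD -mulrA mulrC.
have := @cvg_geometric_series R (gamma ^+ 2 * cst) gamma.
rewrite ger0_norm // => H; exact: (H g1).
Qed.

End Star.

Lemma sum_ind (j : 'I_d) : \sum_(c : 'I_d) (if c == j then 1 else 0 : R) = 1.
Proof. by rewrite (bigD1 j) //= eqxx big1 ?addr0 // => c /negbTE ->. Qed.

Lemma pol_le1 (pi : st -> 'I_d -> R) s a : is_policy pi -> pi s a <= 1.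
Proof.
move=> H; have [H0 H1] := H s; rewrite -H1 (bigD1 a) //= lerDl.
by apply: sumr_ge0 => b _.
Qed.

End Pf.

Theorem theorem2 (R : realType) (d : nat) (gamma : R) (theta : 'I_d -> R) :
  (1 <= d)%N -> 0 <= gamma < 1 -> (forall j, -1 <= theta j <= 1) ->
  opt_value (@Tstar R d) (@rew R d) gamma st0
    - eta_val (@Tstar R d) (greedy (Ttheta theta) (@rew R d) gamma) (@rew R d) gamma st0
  >= ((d%:R - 1) * gamma ^+ 2) / (d%:R * (1 - gamma)).
Proof.
move=> d1 /andP[g0 g1] _.
pose i0 : 'I_d := Ordinal d1.
have gpol : is_policy (greedy (Ttheta theta) (@rew R d) gamma) := @greedy_pol R d _ _ _ i0.
have Eg : eta_val (@Tstar R d) (greedy (Ttheta theta) (@rew R d) gamma) (@rew R d) gamma st0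
    = gamma ^+ 2 * (d%:R^-1) / (1 - gamma).
  rewrite eta_star //; congr (_ * _ / _); rewrite /cst.
  under eq_bigr => i _ do rewrite (@greedy_st0 R d theta gamma) (@greedy_sti R d theta gamma i i0).
  by rewrite -big_distrr /= (proj2 (gpol (sti i0))) mulr1.
pose pis : state d -> 'I_d -> R := fun s c =>
  match s with sti i => if c == i then 1 else 0 | _ => if c == i0 then 1 else 0 end.
have ppol : is_policy pis.
  move=> s; split => [c|]; rewrite /pis; case: s => [|i||];
    rewrite ?sum_ind //; by case: ifP.
have Ub : forall pi, is_policy pi ->
    eta_val (@Tstar R d) pi (@rew R d) gamma st0 <= gamma ^+ 2 * 1 / (1 - gamma).
  move=> pi Hpi; rewrite eta_star //.
  apply: ler_wpM2r; first by rewrite invr_ge0 subr_ge0 ltW.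
  apply: ler_wpM2l; first exact: exprn_ge0.
  rewrite /cst -(proj2 (Hpi st0)); apply: ler_sum => i _.
  rewrite -[X in _ <= X]mulr1; apply: ler_wpM2l; first exact: (proj1 (Hpi st0)).
  exact: pol_le1.
have Eps : eta_val (@Tstar R d) pis (@rew R d) gamma st0 = gamma ^+ 2 * 1 / (1 - gamma).
  rewrite eta_star //; congr (_ * _ / _); rewrite /cst /pis.
  under eq_bigr => i _ do rewrite eqxx mulr1.
  exact: sum_ind.
have Hopt : gamma ^+ 2 * 1 / (1 - gamma) <= opt_value (@Tstar R d) (@rew R d) gamma st0.
  rewrite /opt_value -Eps; apply: sup_upper_bound.
    split; first by exists (eta_val (@Tstar R d) pis (@rew R d) gamma st0); exists pis.
    by exists (gamma ^+ 2 * 1 / (1 - gamma)) => _ [pi Hpi <-]; apply: Ub.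
  by exists pis.
rewrite Eg; apply: le_trans (lerB Hopt (lexx _)).
rewrite le_eqVlt; apply/orP; left; apply/eqP; field.
apply/andP; split; last by rewrite pnatr_eq0 -lt0n.
by rewrite subr_eq0 eq_sym lt_eqF.
Qed.
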